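(* Let $n>3$ and let $A=[A_1,\ldots,A_n]$ be an $n\times n\times n$ ASHM, with $L=L(A)=1A_1+\cdots+nA_n$. Then none of the second row, the $(n-1)$-st row, the second column, and the $(n-1)$-st column of $L$ is constant.
   Context: An $n\times n$ alternating sign matrix (ASM) is an $n\times n$ matrix with entries in $\{0,1,-1\}$ such that in every row and column the nonzeros alternate in sign, beginning and ending with $+1$. An $n\times n\times n$ hypermatrix $A=[a_{ijk}]$ is written $A=[A_1,\ldots,A_n]$ with $A_k=[a_{ijk}]_{i,j}$; lines are obtained by fixing two of the three indices. $A$ is an ASHM if all entries lie in $\{0,\pm1\}$ and in every line the nonzeros alternate in sign beginning and ending with $+1$. A line of a matrix is constant if all its entries are equal. *)

(* Defs.v *)
From HB Require Import structures.
From mathcomp Require Import all_boot all_order all_algebra.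
Set Implicit Arguments. Unset Strict Implicit. Unset Printing Implicit Defensive.
Import Order.TTheory GRing.Theory Num.Theory.
Local Open Scope ring_scope.

(* An n x n x n hypermatrix with integer entries; A i j k = a_{(i+1)(j+1)(k+1)}
   (indices are 0-based ordinals). *)
Definition hypermatrix (n : nat) := 'I_n -> 'I_n -> 'I_n -> int.

Definition alt_sign_seq (s : seq int) : bool :=
  let t := [seq x <- s | x != 0] in
  (t == [seq (-1) ^+ i | i <- iota 0 (size t)]) && odd (size t).

Definition entries01 (n : nat) (A : hypermatrix n) : bool :=
  [forall i, forall j, forall k, (A i j k == 0) || (A i j k == 1) || (A i j k == -1)].

Definition is_ASHM (n : nat) (A : hypermatrix n) : bool :=
  [&& entries01 A,
      [forall i, forall j, alt_sign_seq [seq A i j k | k <- enum 'I_n]],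
      [forall i, forall k, alt_sign_seq [seq A i j k | j <- enum 'I_n]] &
      [forall j, forall k, alt_sign_seq [seq A i j k | i <- enum 'I_n]]].

Definition Lmat (n : nat) (A : hypermatrix n) : 'M[int]_n :=
  \matrix_(i < n, j < n) \sum_(k < n) (k.+1)%:R * A i j k.

Definition const_row (n : nat) (M : 'M[int]_n) (i : 'I_n) : Prop :=
  forall j j' : 'I_n, M i j = M i j'.

Definition const_col (n : nat) (M : 'M[int]_n) (j : 'I_n) : Prop :=
  forall i i' : 'I_n, M i j = M i' j.

(* Main.v *)
Require Import Defs.
From mathcomp Require Import all_boot all_order all_algebra zify.
Import Order.TTheory GRing.Theory Num.Theory.
Local Open Scope ring_scope.

Definition nzs (s : seq int) := [seq x <- s | x != 0].

Lemma alt_prop s : alt_sign_seq s ->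
  odd (size (nzs s)) /\ forall i, (i < size (nzs s))%N -> nth 0 (nzs s) i = (-1) ^+ i.
Proof.
rewrite /alt_sign_seq /= => /andP[/eqP Ht Ho]; split; first exact: Ho.
move=> i Hi; rewrite /nzs Ht (nth_map 0%N); last by rewrite size_iota.
by rewrite nth_iota.
Qed.

Lemma alt_start x y t : alt_sign_seq (x :: y :: t) ->
  (x = 0 \/ x = 1) /\ (x = 0 -> y <> -1) /\ (x = 1 -> y <> 1).
Proof.
move=> /alt_prop [Ho Hn].
have Hp : (0 < size (nzs (x :: y :: t)))%N by exact: odd_gt0.
have H0 := Hn 0%N Hp.
case: (x =P 0) => [Ex|Nx].
  split; first by left. split; last by rewrite Ex.
  move=> _ Ey; move: H0; rewrite /nzs /= Ex Ey /=. by [].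
have Hx : x = 1 by move: H0; rewrite /nzs /=; move/eqP: Nx => /negPf ->.
split; first by right. split; first by move=> /Nx.
move=> _ Ey.
have Hs : (1 < size (nzs (x :: y :: t)))%N by rewrite /nzs /= Hx Ey.
have := Hn 1%N Hs. by rewrite /nzs /= Hx Ey.
Qed.

Lemma alt_rev s : alt_sign_seq s -> alt_sign_seq (rev s).
Proof.
move=> /alt_prop [Ho Hn]; rewrite /alt_sign_seq /= filter_rev size_rev.
rewrite Ho andbT; apply/eqP.
apply: (@eq_from_nth _ 0); first by rewrite size_rev size_map size_iota.
move=> i; rewrite size_rev => Hi.
rewrite nth_rev // (nth_map 0%N) ?size_iota // nth_iota // add0n.
rewrite Hn; last by move: Hi; rewrite /nzs; set m := size _; lia.
move: Hi Ho; rewrite /nzs; set m := size _ => Hi Ho.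
by rewrite -[LHS]signr_odd -[RHS]signr_odd oddB // Ho /=; case: (odd i).
Qed.

Definition SP (x y : int) :=
  (x = 0 \/ x = 1) /\ (x = 0 -> y <> -1) /\ (x = 1 -> y <> 1).

Lemma seq_start s : alt_sign_seq s -> (1 < size s)%N -> SP (nth 0 s 0) (nth 0 s 1).
Proof.
case: s => [|x [|y t]] H Hs; try by [].
rewrite /SP /=; exact: (alt_start _ _ _ H).
Qed.

Lemma nth_line n (f : 'I_n -> int) (b : 'I_n) : nth 0 (map f (enum 'I_n)) b = f b.
Proof. by rewrite (nth_map b) ?size_enum_ord // nth_ord_enum. Qed.

Lemma line_start n (f : 'I_n -> int) (a b : 'I_n) : alt_sign_seq (map f (enum 'I_n)) ->
  val a = 0%N -> val b = 1%N -> SP (f a) (f b).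
Proof.
move=> H va vb; rewrite -(nth_line _ f a) -(nth_line _ f b) va vb.
apply: seq_start => //; rewrite size_map size_enum_ord; have Hb : (val b < n)%N := ltn_ord b; lia.
Qed.

Lemma line_end n (f : 'I_n -> int) (a b : 'I_n) : alt_sign_seq (map f (enum 'I_n)) ->
  val a = (n - 1)%N -> val b = (n - 2)%N -> (3 < n)%N -> SP (f a) (f b).
Proof.
move=> H va vb Hn; rewrite -(nth_line _ f a) -(nth_line _ f b) va vb.
have Hs : size (map f (enum 'I_n)) = n by rewrite size_map size_enum_ord.
have := seq_start _ (alt_rev _ H); rewrite size_rev Hs !nth_rev ?Hs; try lia.
by apply; lia.
Qed.

Lemma seq_one s : alt_sign_seq s -> (forall x, x \in s -> x = 0 \/ x = 1) ->
  size (nzs s) = 1%N.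
Proof.
move=> /alt_prop [Ho Hn] Hs.
case Hz: (size (nzs s)) => [|[|m]] //; first by rewrite Hz in Ho.
have H1 : (1 < size (nzs s))%N by rewrite Hz.
have Hm := mem_nth 0 H1; rewrite Hn // in Hm.
move: Hm; rewrite /nzs mem_filter => /andP[_ /Hs]; rewrite expr1.
by case=> /eqP; rewrite ?oppr_eq0 // -subr_eq0 -opprD oppr_eq0.
Qed.

Lemma line_unique n (f : 'I_n -> int) : alt_sign_seq (map f (enum 'I_n)) ->
  (forall k, f k = 0 \/ f k = 1) -> exists k0, f k0 = 1 /\ forall k, k != k0 -> f k = 0.
Proof.
move=> H H01.
have := seq_one _ H.
have Hx : forall x, x \in map f (enum 'I_n) -> x = 0 \/ x = 1.
  by move=> x /mapP [k _ ->].
move=> /(_ Hx).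
rewrite /nzs filter_map size_map.
case Ef: (filter _ _) => [|k0 [|k1 t]] // _.
exists k0; have Hk0 : k0 \in filter (preim f (fun x => x != 0)) (enum 'I_n).
  by rewrite Ef mem_seq1.
split.
  move: Hk0; rewrite mem_filter => /andP[/= Hnz _].
  by case: (H01 k0) => // E; rewrite E in Hnz.
move=> k Hk; case: (H01 k) => // E.
have : k \in filter (preim f (fun x => x != 0)) (enum 'I_n).
  by rewrite mem_filter mem_enum /= E andbT.
by rewrite Ef mem_seq1 (negPf Hk).
Qed.

Definition w n (f : 'I_n -> int) := \sum_(k < n) (k.+1)%:R * f k.

Lemma w_ind n (f : 'I_n -> int) k0 : f k0 = 1 -> (forall k, k != k0 -> f k = 0) ->
  w n f = (k0.+1)%:R.
Proof.
move=> E Z; rewrite /w (bigD1 k0) //= big1 => [|k Hk].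
  by rewrite E mulr1 addr0.
by rewrite Z // mulr0.
Qed.

Lemma w_inj n (k0 k1 : 'I_n) : ((k0.+1)%:R : int) = (k1.+1)%:R -> k0 = k1.
Proof. by move/eqP; rewrite eqr_nat eqSS => /eqP /val_inj. Qed.

Lemma step2 n (g0 g1 : 'I_n -> int) k0 : g0 k0 = 1 -> (forall k, k != k0 -> g0 k = 0) ->
  (forall k, SP (g0 k) (g1 k)) -> (forall k, g1 k = 0 \/ g1 k = 1 \/ g1 k = -1) ->
  alt_sign_seq (map g1 (enum 'I_n)) -> w n g1 = (k0.+1)%:R -> g1 k0 = -1.
Proof.
move=> E0 Z0 HSP Hent Hal Hw.
case: (g1 k0 =P -1) => // Hne; exfalso.
have [_ [_ Hn1]] := HSP k0.
have H01 : forall k, g1 k = 0 \/ g1 k = 1.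
  move=> k; case: (eqVneq k k0) => [->|Hk].
    by case: (Hent k0) => [|[|]]; auto.
  have [_ [Hz _]] := HSP k; have := Hz (Z0 k Hk).
  by case: (Hent k) => [|[|]]; auto.
have [k2 [E2 Z2]] := line_unique _ _ Hal H01.
have Hw2 := w_ind _ _ _ E2 Z2.
rewrite Hw in Hw2; have Ek := w_inj _ _ _ Hw2; subst k2.
exact: Hn1 E0 E2.
Qed.

Lemma core n (G H : 'I_n -> 'I_n -> int) (j0 j1 j2 j3 : 'I_n) :
 (3 < n)%N -> val j0 = 0%N -> val j1 = 1%N -> val j2 = (n-2)%N -> val j3 = (n-1)%N ->
 (forall j k, G j k = 0 \/ G j k = 1 \/ G j k = -1) ->
 (forall j k, H j k = 0 \/ H j k = 1) ->
 (forall j k, G j k = -1 -> H j k = 1) ->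
 (forall j, alt_sign_seq (map (G j) (enum 'I_n))) ->
 (forall k, alt_sign_seq (map (fun j => G j k) (enum 'I_n))) ->
 (forall k, alt_sign_seq (map (fun j => H j k) (enum 'I_n))) ->
 ~ (forall j j', w n (G j) = w n (G j')).
Proof.
move=> Hn v0 v1 v2 v3 Hent HH HGH HGk HGj HHj Hc.
have HS0 k : SP (G j0 k) (G j1 k) := line_start _ (fun j => G j k) j0 j1 (HGj k) v0 v1.
have HS3 k : SP (G j3 k) (G j2 k) := line_end _ (fun j => G j k) j3 j2 (HGj k) v3 v2 Hn.
have [k0 [E0 Z0]] := line_unique _ (G j0) (HGk j0) (fun k => proj1 (HS0 k)).
have [k1 [E1 Z1]] := line_unique _ (G j3) (HGk j3) (fun k => proj1 (HS3 k)).
have W0 := w_ind _ _ _ E0 Z0.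
have W1 := w_ind _ _ _ E1 Z1.
have Ek : k1 = k0 by apply: w_inj; rewrite -W0 -W1.
subst k1.
have M1 : G j1 k0 = -1.
  apply: (step2 _ (G j0) (G j1) k0 E0 Z0 HS0 (Hent j1) (HGk j1)); by rewrite (Hc j1 j0) W0.
have M2 : G j2 k0 = -1.
  apply: (step2 _ (G j3) (G j2) k0 E1 Z1 HS3 (Hent j2) (HGk j2)); by rewrite (Hc j2 j3) W1.
have h1 := HGH _ _ M1; have h2 := HGH _ _ M2.
have [jj [_ Zj]] := line_unique _ (fun j => H j k0) (HHj k0) (fun j => HH j k0).
have N12 : j1 != j2 by apply/eqP => E; move: v1 v2; rewrite E; lia.
case: (eqVneq j1 jj) => [E|N].
  subst jj; have := Zj j2; rewrite eq_sym N12 h2 => /(_ isT) /eqP; by [].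
by have := Zj j1 N; rewrite h1.
Qed.

Lemma core2 n (G H : 'I_n -> 'I_n -> int) (j0 j1 j2 j3 : 'I_n) :
 (3 < n)%N -> val j0 = 0%N -> val j1 = 1%N -> val j2 = (n-2)%N -> val j3 = (n-1)%N ->
 (forall j k, G j k = 0 \/ G j k = 1 \/ G j k = -1) ->
 (forall j k, SP (H j k) (G j k)) ->
 (forall j, alt_sign_seq (map (G j) (enum 'I_n))) ->
 (forall k, alt_sign_seq (map (fun j => G j k) (enum 'I_n))) ->
 (forall k, alt_sign_seq (map (fun j => H j k) (enum 'I_n))) ->
 ~ (forall j j', w n (G j) = w n (G j')).
Proof.
move=> Hn v0 v1 v2 v3 Hent HS.
apply: (core _ G H j0 j1 j2 j3) => //.
  by move=> j k; case: (HS j k).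
move=> j k E; have [[Hz|Ho] [Hz2 _]] := HS j k => //.
by case: (Hz2 Hz).
Qed.

Theorem mainTheorem7 (n : nat) (A : hypermatrix n) :
  (3 < n)%N -> is_ASHM A ->
  forall r : 'I_n, (val r = 1 \/ val r = n - 2)%N ->
    ~ const_row (Lmat A) r /\ ~ const_col (Lmat A) r.
Proof.
move=> Hn /and4P [E Hk Hj Hi] r Hr.
have HK i j : alt_sign_seq [seq A i j k | k <- enum 'I_n] by exact: (forallP (forallP Hk i) j).
have HJ i k : alt_sign_seq [seq A i j k | j <- enum 'I_n] by exact: (forallP (forallP Hj i) k).
have HI j k : alt_sign_seq [seq A i j k | i <- enum 'I_n] by exact: (forallP (forallP Hi j) k).
have Ent i j k : A i j k = 0 \/ A i j k = 1 \/ A i j k = -1.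
  move: E => /forallP /(_ i) /forallP /(_ j) /forallP /(_ k).
  by case/orP => [/orP [/eqP|/eqP]|/eqP]; auto.
have Hn0 : (0 < n)%N by lia.
have Hn1 : (1 < n)%N by lia.
have Hn2 : (n - 2 < n)%N by lia.
have Hn3 : (n - 1 < n)%N by lia.
pose j0 := Ordinal Hn0. pose j1 := Ordinal Hn1.
pose j2 := Ordinal Hn2. pose j3 := Ordinal Hn3.
have LE i j : Lmat A i j = w n (fun k => A i j k) by rewrite mxE.
case: Hr => Hr.
  have -> : r = j1 by apply: val_inj.
  split.
    move=> C; apply: (core2 _ (fun j k => A j1 j k) (fun j k => A j0 j k) j0 j1 j2 j3) => //.
    - by move=> j k; apply: (line_start _ (fun i => A i j k)).
    - by move=> j j'; rewrite -!LE; apply: C.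
  move=> C; apply: (core2 _ (fun i k => A i j1 k) (fun i k => A i j0 k) j0 j1 j2 j3) => //.
  - by move=> j k; apply: (line_start _ (fun i => A j i k)).
  - by move=> j j'; rewrite -!LE; apply: C.
have -> : r = j2 by apply: val_inj.
split.
  move=> C; apply: (core2 _ (fun j k => A j2 j k) (fun j k => A j3 j k) j0 j1 j2 j3) => //.
  - by move=> j k; apply: (line_end _ (fun i => A i j k)).
  - by move=> j j'; rewrite -!LE; apply: C.
move=> C; apply: (core2 _ (fun i k => A i j2 k) (fun i k => A i j3 k) j0 j1 j2 j3) => //.
- by move=> j k; apply: (line_end _ (fun i => A j i k)).
- by move=> j j'; rewrite -!LE; apply: C.
Qed.
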